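(* Let $\mathbb F_\infty$ have free basis $x_1,x_2,\dots$. Every $S$-invariant subgroup of $\mathbb F_\infty$ that contains the commutator $x_1x_2x_1^{-1}x_2^{-1}$ is fully characteristic, i.e. invariant under every endomorphism of $\mathbb F_\infty$.
   Context: $S\subseteq\mathrm{End}(\mathbb F_\infty)$ is the subsemigroup generated by: (i) for every $n$ and indices $i(1),\dots,i(n)$, the endomorphism $x_k\mapsto x_{i(k)}$ ($k\le n$), $x_k\mapsto x_k$ ($k>n$); (ii) for every $i$, the endomorphism $x_k\mapsto x_i^{-1}x_k$ for all $k$; (iii) for every $k$, the endomorphism $x_k\mapsto e$ fixing all other $x_j$; (iv) the endomorphism $x_k\mapsto x_k^{-1}$ for all $k$; (v) all inner automorphisms. A subgroup $H$ is $S$-invariant if $\phi(H)\subseteq H$ for all $\phi\in S$. *)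

(* Defs.v *)
(* The free group F_infty on generators x_1, x_2, ...
   is modelled as reduced words over letters (i, b) : nat * bool, where
   (i, false) stands for x_{i+1} and (i, true) for x_{i+1}^{-1}
   (0-based indexing of the basis). *)
From mathcomp Require Import all_boot.
Set Implicit Arguments. Unset Strict Implicit. Unset Printing Implicit Defensive.

Definition letter := (nat * bool)%type.
Definition word := seq letter.

Definition linv (a : letter) : letter := (a.1, ~~ a.2).

Fixpoint reduced (w : word) : bool :=
  match w with
  | a :: ((b :: _) as w') => (b != linv a) && reduced w'
  | _ => true
  end.

Definition cons_red (a : letter) (w : word) : word :=
  match w with
  | b :: w' => if b == linv a then w' else a :: w
  | [::] => [:: a]
  end.

Lemma reduced_tail (a : letter) (w : word) : reduced (a :: w) -> reduced w.
Proof. by case: w => [|b w] //= /andP []. Qed.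

Lemma reduced_cons_red a w : reduced w -> reduced (cons_red a w).
Proof.
case: w => [|b w] //= Hw.
case: ifP => Hb; first exact: (reduced_tail Hw).
by rewrite /= Hb Hw.
Qed.

Definition wmul (u v : word) : word := foldr cons_red v u.

Lemma reduced_wmul u v : reduced v -> reduced (wmul u v).
Proof. by elim: u => [|a u IH] //= Hv; apply: reduced_cons_red; apply: IH. Qed.

(* inverse word: prepend linv of each letter in turn (left to right),
   giving linv a_n ... linv a_1 (no cancellation occurs on reduced input) *)
Definition winv (u : word) : word := foldl (fun acc a => cons_red (linv a) acc) [::] u.

Lemma reduced_winv u : reduced (winv u).
Proof.
rewrite /winv; have : reduced [::] by [].
elim: u [::] => [|a u IH] acc //= Hacc.
by apply: IH; apply: reduced_cons_red.
Qed.

Definition FG := {w : word | reduced w}.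

Definition one : FG := exist _ [::] isT.
Definition mul (u v : FG) : FG :=
  exist _ (wmul (proj1_sig u) (proj1_sig v)) (reduced_wmul (proj1_sig u) (proj2_sig v)).
Definition inv (u : FG) : FG :=
  exist _ (winv (proj1_sig u)) (reduced_winv (proj1_sig u)).
Definition gen (i : nat) : FG := exist _ [:: (i, false)] isT.

Definition is_endo (phi : FG -> FG) : Prop :=
  forall u v, phi (mul u v) = mul (phi u) (phi v).

Definition subst (f : nat -> FG) (w : FG) : FG :=
  foldr (fun a acc => mul (if a.2 then inv (f a.1) else f a.1) acc) one (proj1_sig w).

Definition is_subgroup (H : FG -> Prop) : Prop :=
  [/\ H one, (forall u v, H u -> H v -> H (mul u v)) & (forall u, H u -> H (inv u))].

Inductive S_gen : (FG -> FG) -> Prop :=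
  | S_gen_i (n : nat) (idx : nat -> nat) :
      S_gen (subst (fun k => if k < n then gen (idx k) else gen k))
  | S_gen_ii (i : nat) : S_gen (subst (fun k => mul (inv (gen i)) (gen k)))
  | S_gen_iii (k : nat) : S_gen (subst (fun j => if j == k then one else gen j))
  | S_gen_iv : S_gen (subst (fun k => inv (gen k)))
  | S_gen_v (g : FG) : S_gen (fun w => mul (mul g w) (inv g)).

Inductive inS : (FG -> FG) -> Prop :=
  | inS_gen phi : S_gen phi -> inS phi
  | inS_comp phi psi : inS phi -> inS psi -> inS (fun w => phi (psi w)).

Definition S_invariant (H : FG -> Prop) : Prop :=
  forall phi, inS phi -> forall h, H h -> H (phi h).

Definition fully_characteristic (H : FG -> Prop) : Prop :=
  forall phi, is_endo phi -> forall h, H h -> H (phi h).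

Definition comm12 : FG := mul (mul (mul (gen 0) (gen 1)) (inv (gen 0))) (inv (gen 1)).

(* Main.v *)
From Pilot Require Import Defs.
From mathcomp Require Import all_boot.
Import Pilot.Defs.
Set Implicit Arguments. Unset Strict Implicit. Unset Printing Implicit Defensive.

Lemma FG_eq (u v : FG) : proj1_sig u = proj1_sig v -> u = v.
Proof.
case: u => s Hs; case: v => t Ht /= E; subst t.
by rewrite (bool_irrelevance Hs Ht).
Qed.

Lemma linvK a : linv (linv a) = a.
Proof. by case: a => i b; rewrite /linv /= negbK. Qed.

Lemma cons_redK a w : reduced w -> cons_red a (cons_red (linv a) w) = w.
Proof.
case: w => [|b w] /=; first by rewrite eqxx.
rewrite !linvK.
case: (eqVneq b a) => [->|Hb] Hr.
  case: w Hr => [|c w] //= /andP [Hc _].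
  by rewrite (negbTE Hc).
by rewrite /= eqxx.
Qed.

Lemma cons_red_reduced a w : reduced (a :: w) -> cons_red a w = a :: w.
Proof. by case: w => [|b w] //= /andP [Hb _]; rewrite (negbTE Hb). Qed.

Lemma wmul_cons_red a x w : reduced w ->
  wmul (cons_red a x) w = cons_red a (wmul x w).
Proof.
move=> Hw; case: x => [|b x] //=.
case: ifP => [/eqP ->|] //=.
by rewrite cons_redK //; apply: reduced_wmul.
Qed.

Lemma wmulA u v w : reduced v -> reduced w ->
  wmul (wmul u v) w = wmul u (wmul v w).
Proof.
move=> Hv Hw; elim: u => [|a u IH] //=.
by rewrite wmul_cons_red // IH.
Qed.

Lemma wmul_nil w : reduced w -> wmul w [::] = w.
Proof.
elim: w => [|a w IH] //= Hr.
by rewrite IH ?(reduced_tail Hr) // cons_red_reduced.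
Qed.

Lemma winvE u : winv u = wmul (rev (map linv u)) [::].
Proof.
rewrite /winv; move: [::]; elim: u => [|a u IH] acc //=.
by rewrite IH rev_cons -cats1 /wmul foldr_cat.
Qed.

Lemma wmul_invK u w : reduced w -> wmul u (wmul (rev (map linv u)) w) = w.
Proof.
elim: u w => [|a u IH] w Hw //=.
rewrite rev_cons -cats1 /wmul foldr_cat /=.
by rewrite [foldr _ _ u]IH ?cons_redK // reduced_cons_red.
Qed.

Lemma wmul_Kinv u w : reduced w -> wmul (rev (map linv u)) (wmul u w) = w.
Proof.
move=> Hw; have := wmul_invK (rev (map linv u)) Hw.
by rewrite map_rev revK -map_comp (eq_map linvK) map_id.
Qed.

Local Notation "u ** v" := (mul u v) (at level 40, left associativity).

Lemma mulA u v w : u ** v ** w = u ** (v ** w).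
Proof. case: u v w => [u Hu] [v Hv] [w Hw]; apply: FG_eq => /=; exact: wmulA. Qed.

Lemma mul1g u : one ** u = u.
Proof. by apply: FG_eq. Qed.

Lemma mulg1 u : u ** one = u.
Proof. case: u => [u Hu]; apply: FG_eq => /=; exact: wmul_nil. Qed.

Lemma mulgV u : u ** inv u = one.
Proof. apply: FG_eq => /=; rewrite winvE; exact: wmul_invK. Qed.

Lemma mulVg u : inv u ** u = one.
Proof.
case: u => [u Hu]; apply: FG_eq => /=; rewrite winvE wmulA //.
by rewrite /= -{2}(wmul_nil Hu) wmul_Kinv.
Qed.

Lemma mulKg u v : inv u ** (u ** v) = v.
Proof. by rewrite -mulA mulVg mul1g. Qed.

Lemma mulKVg u v : u ** (inv u ** v) = v.
Proof. by rewrite -mulA mulgV mul1g. Qed.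

Lemma inv_uniq u v : u ** v = one -> v = inv u.
Proof. by move=> E; rewrite -(mulKg u v) E mulg1. Qed.

Lemma invK u : inv (inv u) = u.
Proof. by symmetry; apply: inv_uniq; rewrite mulVg. Qed.

Lemma invM u v : inv (u ** v) = inv v ** inv u.
Proof.
by symmetry; apply: inv_uniq; rewrite mulA mulKVg mulgV.
Qed.

Lemma inv1 : inv one = one.
Proof. by symmetry; apply: inv_uniq; rewrite mulg1. Qed.

Ltac gsimpl := rewrite ?(invM, invK, inv1, mulA, mulKg, mulKVg, mulgV, mulVg, mulg1, mul1g).

Definition img (f : nat -> FG) (a : letter) : FG := if a.2 then inv (f a.1) else f a.1.
Definition substw (f : nat -> FG) (s : word) : FG :=
  foldr (fun a acc => img f a ** acc) one s.

Lemma substE f w : subst f w = substw f (proj1_sig w).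
Proof. by []. Qed.

Lemma img_linv f a : img f (linv a) = inv (img f a).
Proof. by case: a => i [|]; rewrite /img /= ?invK. Qed.

Lemma substw_cons_red f a w : substw f (cons_red a w) = img f a ** substw f w.
Proof.
case: w => [|b w] /=; first by [].
case: ifP => [/eqP ->|] //=.
by rewrite img_linv mulKVg.
Qed.

Lemma substw_wmul f u v : substw f (wmul u v) = substw f u ** substw f v.
Proof.
elim: u => [|a u IH] /=; first by rewrite mul1g.
by rewrite substw_cons_red IH mulA.
Qed.

Lemma subst_mul f u v : subst f (u ** v) = subst f u ** subst f v.
Proof. by rewrite !substE /= substw_wmul. Qed.

Lemma subst_gen f i : subst f (gen i) = f i.
Proof. by rewrite substE /= /img /= mulg1. Qed.

Lemma endo_one phi : is_endo phi -> phi one = one.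
Proof.
move=> Hphi; have := Hphi one one; rewrite mul1g => E.
by rewrite -(mulKg (phi one) (phi one)) -E mulVg.
Qed.

Lemma endo_inv phi u : is_endo phi -> phi (inv u) = inv (phi u).
Proof.
move=> Hphi; apply: inv_uniq.
by rewrite -Hphi mulgV endo_one.
Qed.

Lemma subst_endo f : is_endo (subst f).
Proof. by move=> u v; apply: subst_mul. Qed.

Lemma subst_inv f u : subst f (inv u) = inv (subst f u).
Proof. exact: endo_inv (subst_endo f). Qed.

Lemma endo_eq_subst phi w : is_endo phi -> phi w = subst (fun i => phi (gen i)) w.
Proof.
move=> Hphi; case: w => s Hs; elim: s Hs => [|a s IH] Hs.
  have -> : (exist _ [::] Hs : FG) = one by apply: FG_eq.
  by rewrite endo_one.
have Hs' := reduced_tail Hs.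
have -> : (exist _ (a :: s) Hs : FG) = img gen a ** (exist _ s Hs' : FG).
  apply: FG_eq; case: a Hs => i [|] Hs /=; by rewrite cons_red_reduced.
rewrite Hphi IH subst_mul; congr (_ ** _).
by case: a {Hs} => i [|]; rewrite /img /= ?subst_inv subst_gen ?endo_inv.
Qed.

Lemma substw_agree f g s :
  (forall a, a \in s -> f a.1 = g a.1) -> substw f s = substw g s.
Proof.
elim: s => [|a s IH] //= E.
rewrite /img E ?mem_head // IH // => b Hb; apply: E.
by rewrite in_cons Hb orbT.
Qed.

Definition bnd (s : word) := foldr (fun a m => maxn a.1.+1 m) 0 s.

Lemma bndP s a : a \in s -> a.1 < bnd s.
Proof.
elim: s => [|b s IH] //=; rewrite in_cons => /orP [/eqP ->|H].
  by rewrite leq_max leqnn.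
by rewrite leq_max IH ?orbT.
Qed.

Lemma gen_ind (P : FG -> Prop) :
  P one -> (forall u v, P u -> P v -> P (u ** v)) -> (forall u, P u -> P (inv u)) ->
  (forall i, P (gen i)) -> forall u, P u.
Proof.
move=> P1 PM PV PG u.
have E := @endo_eq_subst id u (fun _ _ => erefl).
rewrite /= in E; rewrite {}E substE; elim: (proj1_sig u) => [|a s IH] //=.
by apply: PM => //; rewrite /img; case: ifP => _; auto.
Qed.

Definition cm u v := u ** v ** inv u ** inv v.
Definition conj g x := g ** x ** inv g.

Lemma cmM a b v : cm (a ** b) v = conj a (cm b v) ** cm a v.
Proof. rewrite /cm /conj; gsimpl; done. Qed.
Lemma cmV a v : cm (inv a) v = conj (inv a) (inv (cm a v)).
Proof. rewrite /cm /conj; gsimpl; done. Qed.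
Lemma cmC u v : cm u v = inv (cm v u).
Proof. rewrite /cm; gsimpl; done. Qed.
Lemma cm1 v : cm one v = one.
Proof. rewrite /cm; gsimpl; done. Qed.

Lemma Hconj H : S_invariant H -> forall g h, H h -> H (conj g h).
Proof. by move=> HS g h Hh; apply: (HS _ (inS_gen (S_gen_v g))). Qed.

Lemma Hcommgen H : S_invariant H -> H comm12 -> forall i j, H (cm (gen i) (gen j)).
Proof.
move=> HS Hc i j.
have := HS _ (inS_gen (S_gen_i 2 (fun k => if k == 0 then i else j))) _ Hc.
by rewrite /comm12 !subst_mul !subst_inv !subst_gen.
Qed.

Lemma Hcomm H : is_subgroup H -> S_invariant H -> H comm12 -> forall u v, H (cm u v).
Proof.
move=> [H1 HM HV] HS Hc.
have base : forall i v, H (cm v (gen i)).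
  move=> i; apply: gen_ind.
  - by rewrite cm1.
  - by move=> a b Ha Hb; rewrite cmM; apply: HM => //; apply: Hconj.
  - by move=> a Ha; rewrite cmV; apply: Hconj => //; apply: HV.
  - by move=> j; apply: Hcommgen.
apply: (gen_ind (P := fun u => forall v, H (cm u v))).
- by move=> v; rewrite cm1.
- by move=> a b Ha Hb v; rewrite cmM; apply: HM => //; apply: Hconj.
- by move=> a Ha v; rewrite cmV; apply: Hconj => //; apply: HV.
- by move=> i v; rewrite cmC; apply: HV.
Qed.

Definition good (H : FG -> Prop) :=
  [/\ is_subgroup H, (forall g h, H h -> H (conj g h)) & (forall u v, H (cm u v))].

Definition eqH (H : FG -> Prop) u v := H (u ** inv v).

Lemma eqH_refl H u : good H -> eqH H u u.
Proof. by case=> [[H1 _ _] _ _]; rewrite /eqH mulgV. Qed.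

Lemma eqH_sym H u v : good H -> eqH H u v -> eqH H v u.
Proof. by case=> [[_ _ HV] _ _] E; have := HV _ E; rewrite /eqH; gsimpl. Qed.

Lemma eqH_trans H u v w : good H -> eqH H u v -> eqH H v w -> eqH H u w.
Proof. by case=> [[_ HM _] _ _] E1 E2; have := HM _ _ E1 E2; rewrite /eqH; gsimpl. Qed.

Lemma eqH_mul H u u' v v' : good H -> eqH H u u' -> eqH H v v' -> eqH H (u ** v) (u' ** v').
Proof.
case=> [[_ HM _] HC _] E1 E2; rewrite /eqH.
have -> : u ** v ** inv (u' ** v') = conj u (v ** inv v') ** (u ** inv u').
  by rewrite /conj; gsimpl.
by apply: HM => //; apply: HC.
Qed.

Lemma eqH_comm H u v : good H -> eqH H (u ** v) (v ** u).
Proof.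
case=> [_ _ HK]; rewrite /eqH.
have -> : u ** v ** inv (v ** u) = cm u v by rewrite /cm; gsimpl.
exact: HK.
Qed.

Lemma eqH_H H x y : good H -> eqH H x y -> H y -> H x.
Proof.
case=> [[_ HM _] _ _] E Hy.
have -> : x = x ** inv y ** y by gsimpl.
exact: HM.
Qed.

Lemma img_mulf H f g a : good H ->
  eqH H (img (fun i => f i ** g i) a) (img f a ** img g a).
Proof.
move=> G; case: a => i [|]; rewrite /img /=; last exact: (eqH_refl _ G).
rewrite invM; exact: (eqH_comm _ _ G).
Qed.

Lemma substw_mulf H f g s : good H ->
  eqH H (substw (fun i => f i ** g i) s) (substw f s ** substw g s).
Proof.
move=> G; elim: s => [|a s IH] /=; first by rewrite mul1g; apply: (eqH_refl _ G).
have E := img_mulf f g a G.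
set If := img f a in E *; set Ig := img g a in E *.
set Sf := substw f s in IH *; set Sg := substw g s in IH *.
apply: (eqH_trans (v := (If ** Ig) ** (Sf ** Sg)) G).
  exact: (eqH_mul G).
have -> : If ** Ig ** (Sf ** Sg) = If ** ((Ig ** Sf) ** Sg) by rewrite !mulA.
have -> : If ** Sf ** (Ig ** Sg) = If ** ((Sf ** Ig) ** Sg) by rewrite !mulA.
apply: (eqH_mul G); first exact: (eqH_refl _ G).
apply: (eqH_mul G); last exact: (eqH_refl _ G).
exact: (eqH_comm _ _ G).
Qed.

Lemma substw_ext f g s : (forall i, f i = g i) -> substw f s = substw g s.
Proof. by move=> E; apply: substw_agree => a _; apply: E. Qed.

Lemma substw_one s : substw (fun _ => one) s = one.
Proof. by elim: s => [|a s IH] //=; rewrite IH /img; case: (a.2); rewrite ?inv1 mulg1. Qed.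

Theorem mainTheorem11 (H : FG -> Prop) :
  is_subgroup H -> S_invariant H -> H comm12 -> fully_characteristic H.
Proof.
move=> HG HS Hc phi Hphi h Hh.
have G : good H := And3 HG (Hconj HS) (Hcomm HG HS Hc).
case: HG => H1 HM HV.
rewrite (endo_eq_subst h Hphi) substE.
set f := fun i => phi (gen i).
set s := proj1_sig h; set M := bnd s.
have stepA : forall k u, H (substw (fun i => if i == k then u else one) s).
  move=> k; apply: gen_ind.
  - rewrite (substw_ext (g := fun _ => one)) ?substw_one // => i; by case: ifP.
  - move=> u v Hu Hv.
    rewrite (substw_ext (g := fun i => (if i == k then u else one) ** (if i == k then v else one))); last first.
      by move=> i; case: ifP; rewrite ?mulg1.
    apply: (eqH_H G (substw_mulf _ _ _ G)); exact: HM.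
  - move=> u Hu.
    have E := substw_mulf (fun i => if i == k then inv u else one) (fun i => if i == k then u else one) s G.
    rewrite (substw_ext (g := fun _ => one)) in E; last by move=> i; case: ifP; rewrite ?mulVg ?mulg1.
    rewrite substw_one /eqH mul1g in E.
    move/HV: E; rewrite invK => E.
    set A := substw _ s in E *; set B := substw _ s in Hu E.
    have -> : A = A ** B ** inv B by gsimpl.
    by apply: HM => //; apply: HV.
  - move=> j.
    pose psi := fun w => subst (fun i => if i == j.+1 then one else gen i)
      (subst (fun i => if i < M then gen ((fun i => if i == k then j else j.+1) i) else gen i) w).
    have Hin : inS psi.
      apply: inS_comp; apply: inS_gen; [exact: S_gen_iii | exact: (S_gen_i M (fun i => if i == k then j else j.+1))].
    have Epsi : is_endo psi by move=> u v; rewrite /psi !subst_mul.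
    have := HS _ Hin h Hh; rewrite (endo_eq_subst h Epsi) substE -/s.
    rewrite (substw_agree (g := fun i => if i == k then gen j else one)) // => a Ha.
    rewrite /psi subst_gen bndP //; case: ifP => _; rewrite subst_gen; first by rewrite ifN_eq // neq_ltn ltnSn.
    by rewrite eqxx.
have stepB : forall m, H (substw (fun i => if i < m then f i else one) s).
  elim=> [|m IH].
    by rewrite (substw_ext (g := fun _ => one)) ?substw_one.
  rewrite (substw_ext (g := fun i => (if i < m then f i else one) ** (if i == m then f m else one))); last first.
    move=> i; case: (ltngtP i m) => Hi.
    - by rewrite ltnS ltnW // mulg1.
    - by rewrite ltnNge Hi mulg1.
    - by rewrite -Hi ltnSn mul1g.
  apply: (eqH_H G (substw_mulf _ _ _ G)); exact: HM.
rewrite (substw_agree (g := fun i => if i < M then f i else one)) // => a Ha.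
by rewrite bndP.
Qed.
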